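(* Let $\Omega\subset\mathbb{C}$ be a bounded domain with smooth boundary, let $p_1,\dots,p_n\in\Omega$, and let $u$ be a solution of $\Delta u=e^{2u}$ in $\Omega-\{p_1,\dots,p_n\}$ with $u(x)\to+\infty$ as $x$ approaches $\partial\Omega$ or any $p_l$. Suppose that for each $l=1,\dots,n$, $$u(x)\ge-\log\Bigl(-r_l\,|x-p_l|\,\log\Bigl(\frac{|x-p_l|}{r_l}\Bigr)\Bigr)$$ near $p_l$, where $r_l>0$ is such that $B_{r_l}(p_l)\supset\Omega$. Then there exists a constant $C$ such that $$\Bigl|u(x)+\log\bigl(-|x-p_l|\log|x-p_l|\bigr)\Bigr|<C$$ in a neighborhood of $p_l$, for all $l=1,\dots,n$.
   Context: $\Delta$ is the Euclidean Laplacian; $B_r(p)$ is the open Euclidean disk of radius $r$ centered at $p$. *)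

(* Defs.v *)
From Stdlib Require Import Reals.
From Coquelicot Require Import Coquelicot.
Open Scope R_scope.

Definition pt := (R * R)%type.

Definition dist2 (x y : pt) : R :=
  sqrt ((fst x - fst y) ^ 2 + (snd x - snd y) ^ 2).

Definition dx (f : pt -> R) (z : pt) : R := Derive (fun t => f (t, snd z)) (fst z).
Definition dy (f : pt -> R) (z : pt) : R := Derive (fun t => f (fst z, t)) (snd z).

Definition Lap (f : pt -> R) (z : pt) : R := dx (dx f) z + dy (dy f) z.

Fixpoint Ck (k : nat) (U : pt -> Prop) (f : pt -> R) : Prop :=
  match k with
  | O => forall z, U z -> continuous f z
  | S k' =>
      (forall z, U z -> continuous f z) /\
      (forall z, U z -> ex_derive (fun t => f (t, snd z)) (fst z) /\
                        ex_derive (fun t => f (fst z, t)) (snd z)) /\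
      Ck k' U (dx f) /\ Ck k' U (dy f)
  end.

Definition smooth_fn (f : pt -> R) : Prop := forall k, Ck k (fun _ => True) f.

Definition open_pset (U : pt -> Prop) : Prop :=
  forall z, U z -> exists e, 0 < e /\ forall w, dist2 w z < e -> U w.

Definition connected_open (U : pt -> Prop) : Prop :=
  ~ exists A B : pt -> Prop, open_pset A /\ open_pset B /\
      (forall z, U z -> A z \/ B z) /\ (forall z, U z -> A z -> B z -> False) /\
      (exists z, U z /\ A z) /\ (exists z, U z /\ B z).

Definition plane_domain (U : pt -> Prop) : Prop :=
  open_pset U /\ connected_open U /\ exists z, U z.

Definition bounded_set (U : pt -> Prop) : Prop :=
  exists M, forall z, U z -> dist2 z (0, 0) <= M.

Definition bdry (U : pt -> Prop) (q : pt) : Prop :=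
  ~ U q /\ forall e, 0 < e -> exists z, U z /\ dist2 z q < e.

Definition smooth_boundary (U : pt -> Prop) : Prop :=
  forall q, bdry U q ->
    exists r rho, 0 < r /\ smooth_fn rho /\ (dx rho q <> 0 \/ dy rho q <> 0) /\
      forall z, dist2 z q < r -> (U z <-> rho z < 0).

Definition tends_pinfty_at (D : pt -> Prop) (u : pt -> R) (q : pt) : Prop :=
  forall M, exists d, 0 < d /\ forall x, D x -> dist2 x q < d -> M < u x.

(* Main.v *)
Require Import Defs.
From Stdlib Require Import Reals Lra Lia.
From Coquelicot Require Import Coquelicot.
From mathcomp Require all_boot all_order all_algebra all_classical all_reals all_analysis Rstruct Rstruct_topology.
Open Scope R_scope.

Definition Sq (c z : R * R) : R := (fst z - fst c) ^ 2 + (snd z - snd c) ^ 2.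

Definition epsdelta (f : R * R -> R) (z : R * R) : Prop :=
  forall e, 0 < e -> exists d, 0 < d /\ forall w : R * R,
    Rabs (fst w - fst z) < d -> Rabs (snd w - snd z) < d ->
    Rabs (f w - f z) < e.

Lemma cont_epsdelta (f : R * R -> R) z : continuous f z -> epsdelta f z.
Proof.
intros H e He.
destruct (proj1 (filterlim_locally f (f z)) H (mkposreal e He)) as [d Hd].
exists d; split; [apply cond_pos|].
intros w H1 H2. apply (Hd w). split; assumption.
Qed.

Lemma Sq_cont c z : continuous (Sq c) z.
Proof.
unfold Sq.
apply (continuous_plus (fun z => (fst z - fst c)^2) (fun z => (snd z - snd c)^2)).
- apply (continuous_comp (fun z => fst z - fst c) (fun t => t^2)).
  + apply (continuous_minus (fun z:R*R => fst z) (fun _ => fst c)). apply continuous_fst. apply continuous_const.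
  + apply (@ex_derive_continuous R_AbsRing R_NormedModule (fun t => t^2)). auto_derive. auto.
- apply (continuous_comp (fun z => snd z - snd c) (fun t => t^2)).
  + apply (continuous_minus (fun z:R*R => snd z) (fun _ => snd c)). apply continuous_snd. apply continuous_const.
  + apply (@ex_derive_continuous R_AbsRing R_NormedModule (fun t => t^2)). auto_derive. auto.
Qed.

Lemma Sq_pt c lo : 0 <= lo -> Sq c (fst c + sqrt lo, snd c) = lo.
Proof.
intros H; unfold Sq; simpl.
replace (fst c + sqrt lo - fst c) with (sqrt lo) by ring.
simpl; rewrite Rmult_1_r, sqrt_sqrt by auto. ring.
Qed.

Lemma Sq_box c z hi : Sq c z <= hi ->
  fst c - sqrt hi <= fst z <= fst c + sqrt hi /\ snd c - sqrt hi <= snd z <= snd c + sqrt hi.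
Proof.
unfold Sq; intros H.
assert (H0 : 0 <= hi) by (pose proof (pow2_ge_0 (fst z - fst c)); pose proof (pow2_ge_0 (snd z - snd c)); lra).
assert (A1 : Rabs (fst z - fst c) <= sqrt hi).
{ rewrite <- sqrt_pow2 with (x := Rabs (fst z - fst c)) by apply Rabs_pos.
  apply sqrt_le_1_alt. rewrite pow2_abs. pose proof (pow2_ge_0 (fst z - fst c)); pose proof (pow2_ge_0 (snd z - snd c)); lra. }
assert (A2 : Rabs (snd z - snd c) <= sqrt hi).
{ rewrite <- sqrt_pow2 with (x := Rabs (snd z - snd c)) by apply Rabs_pos.
  apply sqrt_le_1_alt. rewrite pow2_abs. pose proof (pow2_ge_0 (fst z - fst c)); pose proof (pow2_ge_0 (snd z - snd c)); lra. }
apply Rabs_le_between' in A1. apply Rabs_le_between' in A2. lra.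
Qed.

Module EVTM.
Import all_boot all_order all_algebra all_classical all_reals all_analysis Rstruct Rstruct_topology.
Import Order.TTheory GRing.Theory Num.Theory.
Local Open Scope classical_set_scope.

Lemma bridge (f : R * R -> R) z : epsdelta f z -> {for z, continuous f}.
Proof.
move=> H.
rewrite /continuous_at.
apply/(@cvgrPdist_lt _ R^o).
move=> e /RltP e0.
have [d [/RltP d0 Hd]] := H e e0.
exists (ball z.1 d, ball z.2 d).
  split; apply: nbhsx_ballx; exact: d0.
case=> w1 w2 [/= b1 b2].
move: b1 b2; rewrite /ball /= => b1 b2.
rewrite distrC -RabsE.
apply/RltP; apply: (Hd (w1, w2)) => /=.
  by apply/RltP; rewrite RabsE distrC.
by apply/RltP; rewrite RabsE distrC.
Qed.

Lemma evt (f : R * R -> R) (c : R * R) (lo hi : R) : Rle 0 lo -> Rle lo hi ->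
  (forall z, Rle lo (Sq c z) -> Rle (Sq c z) hi -> epsdelta f z) ->
  exists z0, Rle lo (Sq c z0) /\ Rle (Sq c z0) hi /\
    forall z, Rle lo (Sq c z) -> Rle (Sq c z) hi -> Rle (f z) (f z0).
Proof.
move=> H0 H1 Hc.
pose A := Sq c @^-1` ([set x | (lo <= x)%R] `&` [set x | (x <= hi)%R]).
have A0 : A !=set0.
  exists (c.1 + sqrt lo, c.2)%coqR; rewrite /A /= Sq_pt //.
  by split; apply/RleP => //; apply: Rle_refl.
have cA : compact A.
  pose B : set (R * R) := [set` (`[c.1 - sqrt hi, c.1 + sqrt hi]%R)] `*` [set` (`[c.2 - sqrt hi, c.2 + sqrt hi]%R)].
  apply: (@subclosed_compact _ A B).
  - apply: preimage_closed.
      by move=> z _; apply: bridge; apply: cont_epsdelta; apply: Sq_cont.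
    by apply: closedI; [apply: closed_ge | apply: closed_le].
  - by apply: compact_setX; apply: segment_compact.
  - move=> z [_ /RleP /Sq_box [[a1 a2] [a3 a4]]] /=.
    by rewrite /B /= !in_itv /=; split; apply/andP; split; apply/RleP.
have cf : {within A, continuous f}.
  apply: continuous_in_subspaceT => z /set_mem [/RleP z1 /RleP z2].
  by apply: bridge; apply: Hc.
have [z0 /set_mem [/RleP z1 /RleP z2] Hz] := compact_EVT_max A0 cA cf.
exists z0; split => //; split => // z a1 a2.
apply/RleP; apply: Hz; apply/mem_set; split; apply/RleP => //.
Qed.
End EVTM.



Lemma d2_max (g g' : R -> R) x0 delta L : 0 < delta ->
  (forall t, Rabs (t - x0) < delta -> is_derive g t (g' t)) ->
  is_derive g' x0 L ->
  (forall t, Rabs (t - x0) < delta -> g t <= g x0) -> L <= 0.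
Proof.
intros Hd Hg Hg' Hmax.
destruct (Rle_or_lt L 0) as [HL|HL]; [exact HL|exfalso].
apply is_derive_Reals in Hg'.
destruct (Hg' (L/2) ltac:(lra)) as [e He].
set (eta := Rmin e delta).
assert (Heta : 0 < eta) by (unfold eta; apply Rmin_pos; [apply cond_pos|lra]).
assert (Hq : forall h, h <> 0 -> Rabs h < eta -> (g' (x0 + h) - g' x0) / h > L/2).
{ intros h H0 H1. assert (Rabs h < e) by (unfold eta in H1; pose proof (Rmin_l e delta); lra).
  specialize (He h H0 H). apply Rabs_def2 in He. lra. }
assert (Hcont : forall t, Rabs (t - x0) < delta -> continuity_pt g t).
{ intros t Ht. apply continuity_pt_filterlim. apply (ex_derive_continuous g). exists (g' t). now apply Hg. }
assert (Hin : forall t, Rabs (t - x0) < eta -> Rabs (t - x0) < delta).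
{ intros t Ht. pose proof (Rmin_r e delta). unfold eta in Ht. lra. }
destruct (Rle_or_lt 0 (g' x0)) as [Hp|Hn].
-
  assert (Hpos : forall t, x0 < t < x0 + eta -> g' t > 0).
  { intros t Ht. specialize (Hq (t - x0) ltac:(lra) ltac:(rewrite Rabs_pos_eq; lra)).
    replace (x0 + (t - x0)) with t in Hq by ring.
    assert (g' t - g' x0 > L/2 * (t - x0)).
    { apply Rmult_gt_compat_r with (r := t - x0) in Hq; [|lra].
      unfold Rdiv in Hq. rewrite Rmult_assoc, Rinv_l in Hq by lra. lra. }
    nra. }
  set (t1 := x0 + eta/2). set (t2 := x0 + 3*eta/4).
  assert (M1 : g t1 >= g x0).
  { destruct (MVT_gen g x0 t1 g') as [c [Hc Hc']].
    - intros x Hx. rewrite Rmin_left, Rmax_right in Hx by (unfold t1; lra).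
      apply Hg, Hin. rewrite Rabs_pos_eq; unfold t1 in Hx; lra.
    - intros x Hx. rewrite Rmin_left, Rmax_right in Hx by (unfold t1; lra).
      apply Hcont, Hin. rewrite Rabs_pos_eq; unfold t1 in Hx; lra.
    - rewrite Rmin_left, Rmax_right in Hc by (unfold t1; lra).
      assert (g' c >= 0).
      { destruct (Req_dec c x0) as [->|Hne]; [lra|]. apply Rgt_ge, Hpos. unfold t1 in Hc; lra. }
      assert (t1 - x0 > 0) by (unfold t1; lra). nra. }
  assert (M2 : g t1 < g t2).
  { apply (incr_function g x0 (x0 + eta) g').
    - intros x H1 H2. simpl in H1, H2. apply Hg, Hin. rewrite Rabs_pos_eq; lra.
    - intros x H1 H2. simpl in H1, H2. apply Hpos. lra.
    - simpl. unfold t1; lra.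
    - unfold t1, t2; lra.
    - simpl. unfold t2; lra. }
  assert (g t2 <= g x0). { apply Hmax, Hin. unfold t2. rewrite Rabs_pos_eq; lra. }
  lra.
-
  assert (Hneg : forall t, x0 - eta < t < x0 -> g' t < 0).
  { intros t Ht. specialize (Hq (t - x0) ltac:(lra) ltac:(rewrite Rabs_left; lra)).
    replace (x0 + (t - x0)) with t in Hq by ring.
    assert (g' t - g' x0 < L/2 * (t - x0)).
    { apply Rmult_gt_compat_r with (r := x0 - t) in Hq; [|lra].
      replace ((g' t - g' x0) / (t - x0) * (x0 - t)) with (-(g' t - g' x0)) in Hq
        by (field; lra). lra. }
    nra. }
  set (t1 := x0 - eta/2). set (t2 := x0 - 3*eta/4).
  assert (M1 : g t1 >= g x0).
  { destruct (MVT_gen g t1 x0 g') as [c [Hc Hc']].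
    - intros x Hx. rewrite Rmin_left, Rmax_right in Hx by (unfold t1; lra).
      apply Hg, Hin. rewrite Rabs_left1; unfold t1 in Hx; lra.
    - intros x Hx. rewrite Rmin_left, Rmax_right in Hx by (unfold t1; lra).
      apply Hcont, Hin. rewrite Rabs_left1; unfold t1 in Hx; lra.
    - rewrite Rmin_left, Rmax_right in Hc by (unfold t1; lra).
      assert (g' c <= 0).
      { destruct (Req_dec c x0) as [->|Hne]; [lra|]. apply Rlt_le, Hneg. unfold t1 in Hc; lra. }
      assert (x0 - t1 > 0) by (unfold t1; lra). nra. }
  assert (M2 : - g t2 < - g t1).
  { apply (incr_function (fun t => - g t) (x0 - eta) x0 (fun t => - g' t)).
    - intros x H1 H2. simpl in H1, H2. apply (is_derive_opp g). apply Hg, Hin. rewrite Rabs_left; lra.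
    - intros x H1 H2. simpl in H1, H2. specialize (Hneg x). lra.
    - simpl. unfold t2; lra.
    - unfold t1, t2; lra.
    - simpl. unfold t1; lra. }
  assert (g t2 <= g x0). { apply Hmax, Hin. unfold t2. rewrite Rabs_left; lra. }
  lra.
Qed.

Lemma rad1 (Phi Phi1 : R -> R) a k t :
  is_derive Phi ((t-a)^2+k) (Phi1 ((t-a)^2+k)) ->
  is_derive (fun t => Phi ((t-a)^2+k)) t (2*(t-a)*Phi1((t-a)^2+k)).
Proof.
intros H.
assert (Hi : is_derive (fun t => (t-a)^2+k) t (2*(t-a))).
{ auto_derive; auto; ring. }
pose proof (is_derive_comp Phi (fun t => (t-a)^2+k) t _ _ H Hi) as Hc.
eapply is_derive_ext; [|exact Hc]. intros; reflexivity.
Qed.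

Lemma is_derive_val (f : R -> R) x l l' : is_derive f x l -> l = l' -> is_derive f x l'.
Proof. intros H ->; exact H. Qed.

Lemma rad2 (Phi1 Phi2 : R -> R) a k t :
  is_derive Phi1 ((t-a)^2+k) (Phi2 ((t-a)^2+k)) ->
  is_derive (fun t => 2*(t-a)*Phi1((t-a)^2+k)) t
    (2*Phi1((t-a)^2+k) + 4*(t-a)^2*Phi2((t-a)^2+k)).
Proof.
intros H.
pose proof (rad1 Phi1 Phi2 a k t H) as H1.
assert (Hi : is_derive (fun t => 2*(t-a)) t 2) by (auto_derive; auto; ring).
pose proof (is_derive_mult (fun t => 2*(t-a)) (fun t => Phi1((t-a)^2+k)) t _ _ Hi H1 Rmult_comm) as Hm.
eapply is_derive_val; [exact Hm|].
unfold plus, mult; simpl. ring.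
Qed.

Lemma Sq_swap c x0 t : Sq c (x0, t) = (t - snd c)^2 + (x0 - fst c)^2.
Proof. unfold Sq; simpl; ring. Qed.

Lemma MP_local (D : pt -> Prop) (u : pt -> R) (c : pt) (Phi Phi1 Phi2 : R -> R) (z0 : pt) (delta : R) :
  Ck 2 D u -> (forall x, D x -> Lap u x = exp (2 * u x)) ->
  0 < delta ->
  (forall w, Rabs (fst w - fst z0) < delta -> Rabs (snd w - snd z0) < delta ->
     D w /\ u w - Phi (Sq c w) <= u z0 - Phi (Sq c z0)) ->
  (forall w, Rabs (fst w - fst z0) < delta -> Rabs (snd w - snd z0) < delta ->
     is_derive Phi (Sq c w) (Phi1 (Sq c w))) ->
  is_derive Phi1 (Sq c z0) (Phi2 (Sq c z0)) ->
  4 * Sq c z0 * Phi2 (Sq c z0) + 4 * Phi1 (Sq c z0) <= exp (2 * Phi (Sq c z0)) ->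
  u z0 <= Phi (Sq c z0).
Proof.
intros Hreg Heq Hdel Hbox HP1 HP2 Hsup.
destruct z0 as [x0 y0].
destruct Hreg as (Hc & Hd & (H1c & H1d & _ & _) & (H2c & H2d & _ & _)).
assert (HD0 : D (x0, y0)).
{ apply (Hbox (x0,y0)); simpl; rewrite Rminus_eq_0, Rabs_R0; lra. }
assert (Ex : dx (dx u) (x0, y0) - (2 * Phi1 (Sq c (x0,y0)) + 4 * (x0 - fst c)^2 * Phi2 (Sq c (x0,y0))) <= 0).
{ apply (d2_max (fun t => u (t, y0) - Phi (Sq c (t, y0)))
                (fun t => dx u (t, y0) - 2 * (t - fst c) * Phi1 (Sq c (t, y0))) x0 delta); auto.
  - intros t Ht.
    assert (Hb : Rabs (snd (t,y0) - snd (x0,y0)) < delta) by (simpl; rewrite Rminus_eq_0, Rabs_R0; lra).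
    apply (is_derive_minus (fun t => u (t, y0)) (fun t => Phi (Sq c (t, y0)))).
    + apply (Derive_correct (fun t0 => u (t0, snd (t, y0)))). apply (Hd (t,y0)). apply (Hbox (t,y0)); auto.
    + apply (rad1 Phi Phi1 (fst c) ((y0 - snd c)^2) t). apply (HP1 (t, y0)); auto.
  - apply (is_derive_minus (fun t => dx u (t, y0)) (fun t => 2 * (t - fst c) * Phi1 (Sq c (t, y0)))).
    + apply (Derive_correct (fun t0 => dx u (t0, snd (x0, y0)))). apply (H1d (x0,y0) HD0).
    + apply (rad2 Phi1 Phi2 (fst c) ((y0 - snd c)^2) x0). exact HP2.
  - intros t Ht.
    assert (Hb : Rabs (snd (t,y0) - snd (x0,y0)) < delta) by (simpl; rewrite Rminus_eq_0, Rabs_R0; lra).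
    apply (Hbox (t,y0)); auto. }
assert (Ey : dy (dy u) (x0, y0) - (2 * Phi1 (Sq c (x0,y0)) + 4 * (y0 - snd c)^2 * Phi2 (Sq c (x0,y0))) <= 0).
{ apply (d2_max (fun t => u (x0, t) - Phi (Sq c (x0, t)))
                (fun t => dy u (x0, t) - 2 * (t - snd c) * Phi1 (Sq c (x0, t))) y0 delta); auto.
  - intros t Ht.
    assert (Hb : Rabs (fst (x0,t) - fst (x0,y0)) < delta) by (simpl; rewrite Rminus_eq_0, Rabs_R0; lra).
    apply (is_derive_minus (fun t => u (x0, t)) (fun t => Phi (Sq c (x0, t)))).
    + apply (Derive_correct (fun t0 => u (fst (x0, t), t0))). apply (Hd (x0,t)). apply (Hbox (x0,t)); auto.
    + apply (is_derive_ext (fun t => Phi ((t - snd c)^2 + (x0 - fst c)^2))); [intros; rewrite Sq_swap; reflexivity|].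
      rewrite (Sq_swap c x0).
      apply (rad1 Phi Phi1 (snd c) ((x0 - fst c)^2) t). rewrite <- (Sq_swap c x0). apply (HP1 (x0, t)); auto.
  - apply (is_derive_minus (fun t => dy u (x0, t)) (fun t => 2 * (t - snd c) * Phi1 (Sq c (x0, t)))).
    + apply (Derive_correct (fun t0 => dy u (fst (x0, y0), t0))). apply (H2d (x0,y0) HD0).
    + apply (is_derive_ext (fun t => 2 * (t - snd c) * Phi1 ((t - snd c)^2 + (x0 - fst c)^2))); [intros; rewrite Sq_swap; reflexivity|].
      rewrite (Sq_swap c x0).
      apply (rad2 Phi1 Phi2 (snd c) ((x0 - fst c)^2) y0). rewrite <- (Sq_swap c x0). exact HP2.
  - intros t Ht.
    assert (Hb : Rabs (fst (x0,t) - fst (x0,y0)) < delta) by (simpl; rewrite Rminus_eq_0, Rabs_R0; lra).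
    apply (Hbox (x0,t)); auto. }
pose proof (Heq _ HD0) as HL. unfold Lap in HL.
assert (HS : Sq c (x0, y0) = (x0 - fst c)^2 + (y0 - snd c)^2) by reflexivity.
destruct (Rle_or_lt (u (x0,y0)) (Phi (Sq c (x0, y0)))) as [H|H]; [exact H|exfalso].
assert (exp (2 * Phi (Sq c (x0, y0))) < exp (2 * u (x0, y0))) by (apply exp_increasing; lra).
rewrite HS in Hsup. rewrite <- HS in Hsup.
assert (4 * Sq c (x0, y0) * Phi2 (Sq c (x0, y0)) = 4 * (x0 - fst c)^2 * Phi2 (Sq c (x0, y0)) + 4 * (y0 - snd c)^2 * Phi2 (Sq c (x0, y0))) by (rewrite HS; ring).
lra.
Qed.


Lemma Sq_nonneg c z : 0 <= Sq c z.
Proof. unfold Sq. pose proof (pow2_ge_0 (fst z - fst c)); pose proof (pow2_ge_0 (snd z - snd c)); lra. Qed.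

Lemma compare (D : pt -> Prop) (u : pt -> R) (c : pt) (Phi Phi1 Phi2 : R -> R)
  (a b lo hi : R) (x : pt) :
  Ck 2 D u -> (forall x, D x -> Lap u x = exp (2 * u x)) ->
  0 <= lo -> a < lo -> hi < b -> lo <= Sq c x <= hi ->
  (forall z, lo <= Sq c z <= hi -> D z) ->
  (forall s, a < s < b -> is_derive Phi s (Phi1 s) /\ is_derive Phi1 s (Phi2 s) /\
      4 * s * Phi2 s + 4 * Phi1 s <= exp (2 * Phi s)) ->
  (forall z, Sq c z = hi -> u z - Phi (Sq c z) < u x - Phi (Sq c x)) ->
  (0 < lo -> forall z, Sq c z = lo -> u z - Phi (Sq c z) < u x - Phi (Sq c x)) ->
  u x <= Phi (Sq c x).
Proof.
intros Hreg Heq Hlo Ha Hb Hx HD HPhi Hhi Hlo'.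
set (f := fun z => u z - Phi (Sq c z)).
assert (Hcf : forall z, lo <= Sq c z -> Sq c z <= hi -> epsdelta f z).
{ intros z H1 H2. apply cont_epsdelta. unfold f.
  apply (continuous_minus u (fun z => Phi (Sq c z))).
  - destruct Hreg as [Hc _]. apply Hc, HD; lra.
  - apply (continuous_comp (Sq c) Phi). apply Sq_cont.
    apply (@ex_derive_continuous R_AbsRing R_NormedModule Phi).
    exists (Phi1 (Sq c z)). apply HPhi; lra. }
destruct (EVTM.evt f c lo hi Hlo ltac:(lra) Hcf) as [z0 [Hz1 [Hz2 Hmax]]].
assert (Hfx : f x <= f z0) by (apply Hmax; lra).
assert (Hne_hi : Sq c z0 < hi).
{ destruct (Rle_lt_or_eq_dec _ _ Hz2) as [H|H]; [exact H|].
  specialize (Hhi z0 H). unfold f in Hfx. lra. }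
assert (Hdel : exists d, 0 < d /\ forall w, Rabs (fst w - fst z0) < d -> Rabs (snd w - snd z0) < d ->
           lo <= Sq c w <= hi).
{ destruct (Rle_lt_or_eq_dec _ _ Hz1) as [H|H].
  - destruct (cont_epsdelta _ _ (Sq_cont c z0) (Rmin (Sq c z0 - lo) (hi - Sq c z0))) as [d [Hd Hd']].
    { apply Rmin_pos; lra. }
    exists d; split; auto. intros w H1 H2. specialize (Hd' w H1 H2).
    pose proof (Rmin_l (Sq c z0 - lo) (hi - Sq c z0)). pose proof (Rmin_r (Sq c z0 - lo) (hi - Sq c z0)).
    apply Rabs_def2 in Hd'. lra.
  - assert (lo = 0).
    { destruct (Rle_lt_or_eq_dec _ _ Hlo) as [H'|H']; [|lra].
      specialize (Hlo' H' z0 (eq_sym H)). unfold f in Hfx. lra. }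
    destruct (cont_epsdelta _ _ (Sq_cont c z0) (hi - Sq c z0)) as [d [Hd Hd']]; [lra|].
    exists d; split; auto. intros w H1 H2. specialize (Hd' w H1 H2).
    pose proof (Sq_nonneg c w). apply Rabs_def2 in Hd'. lra. }
destruct Hdel as [d [Hd Hd']].
assert (Hz0 : u z0 <= Phi (Sq c z0)).
{ apply (MP_local D u c Phi Phi1 Phi2 z0 d Hreg Heq Hd).
  - intros w H1 H2. specialize (Hd' w H1 H2). split; [apply HD; lra|].
    apply (Hmax w); lra.
  - intros w H1 H2. specialize (Hd' w H1 H2). apply HPhi; lra.
  - apply HPhi; lra.
  - apply HPhi; lra. }
unfold f in Hfx. lra.
Qed.

Lemma exp2ln A B : 0 < A -> 0 < B -> exp (2 * (ln A - ln B)) = (A / B)^2.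
Proof.
intros HA HB.
replace (2 * (ln A - ln B)) with ((ln A - ln B) + (ln A - ln B)) by ring.
rewrite exp_plus. unfold Rminus. rewrite exp_plus, exp_Ropp, !exp_ln by auto.
field. lra.
Qed.

Lemma ball_super R s : 0 < R -> s < R^2 ->
  is_derive (fun s => ln (2*R) - ln (R^2 - s)) s (/ (R^2 - s)) /\
  is_derive (fun s => / (R^2 - s)) s (/ (R^2 - s)^2) /\
  4 * s * / (R^2 - s)^2 + 4 * / (R^2 - s) <= exp (2 * (ln (2*R) - ln (R^2 - s))).
Proof.
intros HR Hs.
split; [|split].
- auto_derive; [lra|]. field. lra.
- auto_derive; [lra|]. field. lra.
- rewrite exp2ln by nra. right. field. lra.
Qed.

Lemma KO (D : pt -> Prop) (u : pt -> R) (x : pt) (R0 : R) :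
  Ck 2 D u -> (forall x, D x -> Lap u x = exp (2 * u x)) ->
  0 < R0 -> (forall z, Sq x z <= R0^2 -> D z) ->
  u x <= ln (2*R0) - ln (R0^2).
Proof.
intros Hreg Heq HR HD.
assert (Hcu : forall z, 0 <= Sq x z -> Sq x z <= R0^2 -> epsdelta u z).
{ intros z _ H. apply cont_epsdelta. destruct Hreg as [Hc _]. apply Hc, HD; auto. }
destruct (EVTM.evt u x 0 (R0^2) (Rle_refl 0) ltac:(nra) Hcu) as [zm [_ [_ Hm]]].
set (M := u zm).
set (K := u x - (ln (2*R0) - ln (R0^2)) - M + ln (2*R0)).
set (t := Rmin (R0^2/2) (exp K / 2)).
assert (Ht : 0 < t) by (unfold t; apply Rmin_pos; [nra|pose proof (exp_pos K); lra]).
assert (Ht1 : t <= R0^2/2) by apply Rmin_l.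
assert (Ht2 : ln t < K).
{ assert (t < exp K) by (pose proof (Rmin_r (R0^2/2) (exp K / 2)); pose proof (exp_pos K); unfold t in *; lra).
  rewrite <- (ln_exp K). apply ln_increasing; auto. }
assert (HSx : Sq x x = 0) by (unfold Sq; ring).
assert (Hx0 : 0 <= Sq x x <= R0^2 - t) by (rewrite HSx; nra).
assert (H := compare D u x (fun s => ln (2*R0) - ln (R0^2 - s)) (fun s => / (R0^2 - s))
   (fun s => / (R0^2 - s)^2) (-1) (R0^2) 0 (R0^2 - t) x Hreg Heq (Rle_refl 0) ltac:(lra) ltac:(lra)
   Hx0).
rewrite HSx in H. replace (R0^2 - 0) with (R0^2) in H by ring.
apply H.
- intros z Hz. apply HD. lra.
- intros s Hs. apply ball_super; lra.
- intros z Hz. rewrite Hz. cbv beta. replace (R0^2 - (R0^2 - t)) with t by ring. replace (R0^2 - 0) with (R0^2) by ring.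
  assert (u z <= M) by (apply Hm; [apply Sq_nonneg|lra]).
  unfold K in Ht2. lra.
- intros Hf; lra.
Qed.




Definition Lf (rho s : R) : R := ln rho - ln s / 2.
Definition Phe (rho eps s : R) : R := - (ln s / 2) - ln (Lf rho s) + eps * Lf rho s.
Definition Phe1 (rho eps s : R) : R := - / (2 * s) + / (2 * s * Lf rho s) - eps / (2 * s).
Definition Phe2 (rho eps s : R) : R :=
  / (2 * s^2) - (2 * Lf rho s - 1) / (4 * s^2 * (Lf rho s)^2) + eps / (2 * s^2).

Lemma Lf_pos rho s : 0 < rho -> 0 < s < rho^2 -> 0 < Lf rho s.
Proof.
intros Hr Hs. unfold Lf.
assert (ln s < ln (rho^2)) by (apply ln_increasing; lra).
replace (rho^2) with (rho*rho) in H by ring. rewrite ln_mult in H by auto. lra.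
Qed.

Lemma punct_super rho eps s : 0 < rho -> 0 <= eps -> 0 < s < rho^2 ->
  is_derive (Phe rho eps) s (Phe1 rho eps s) /\
  is_derive (Phe1 rho eps) s (Phe2 rho eps s) /\
  4 * s * Phe2 rho eps s + 4 * Phe1 rho eps s <= exp (2 * Phe rho eps s).
Proof.
intros Hr He Hs.
pose proof (Lf_pos rho s Hr Hs) as HL.
unfold Phe, Phe1, Phe2 in *. unfold Lf in *.
split; [|split].
- auto_derive; [repeat split; try exact I; unfold Rdiv in *; lra|]. field. repeat split; intro; unfold Rdiv in *; lra.
- auto_derive; [repeat split; try exact I; try (intro; unfold Rdiv in *; nra); unfold Rdiv in *; nra|]. field. repeat split; intro; unfold Rdiv in *; nra.
- set (L := ln rho - ln s / 2) in *. clearbody L.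
  replace (4 * s * (/ (2 * s ^ 2) - (2 * L - 1) / (4 * s ^ 2 * L ^ 2) + eps / (2 * s ^ 2)) +
    4 * (- / (2 * s) + / (2 * s * L) - eps / (2 * s))) with (/ (s * L^2)) by (field; lra).
  assert (E : 2 * (- (ln s / 2) - ln L + eps * L) = - (ln s + 2 * ln L) + 2 * eps * L) by field. rewrite E. clear E.
  rewrite exp_plus, exp_Ropp, exp_plus.
  replace (2 * ln L) with (ln L + ln L) by ring. rewrite exp_plus, !exp_ln by lra.
  assert (1 <= exp (2 * eps * L)).
  { rewrite <- exp_0. assert (H0 : 0 <= 2*eps*L) by nra.
    destruct (Rle_lt_or_eq_dec _ _ H0) as [H|H].
    - left; apply exp_increasing. lra.
    - right; rewrite H; reflexivity. }
  assert (0 < / (s * (L * L))) by (apply Rinv_0_lt_compat; apply Rmult_lt_0_compat; [lra| apply Rmult_lt_0_compat; lra]).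
  replace (/ (s * L ^ 2)) with (/ (s * (L * L)) * 1) by (field; split; intro; subst; lra).
  apply Rmult_le_compat_l; lra.
Qed.

Lemma ln_lt_self q : 0 < q -> ln q < q.
Proof.
intros H. rewrite <- (ln_exp q) at 2. apply ln_increasing; auto.
pose proof (exp_ineq1_le q). lra.
Qed.

Lemma Sq_sym a b : Sq a b = Sq b a.
Proof. unfold Sq; ring. Qed.

Lemma Sq_tri a b c : sqrt (Sq a c) <= sqrt (Sq a b) + sqrt (Sq b c).
Proof.
pose proof (triangle (fst c) (snd c) (fst a) (snd a) (fst b) (snd b)) as H.
unfold dist_euc, Rsqr in H. unfold Sq.
replace ((fst c - fst a) * (fst c - fst a) + (snd c - snd a) * (snd c - snd a))
  with ((fst c - fst a) ^ 2 + (snd c - snd a) ^ 2) in H by ring.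
replace ((fst c - fst b) * (fst c - fst b) + (snd c - snd b) * (snd c - snd b))
  with ((fst c - fst b) ^ 2 + (snd c - snd b) ^ 2) in H by ring.
replace ((fst b - fst a) * (fst b - fst a) + (snd b - snd a) * (snd b - snd a))
  with ((fst b - fst a) ^ 2 + (snd b - snd a) ^ 2) in H by ring.
lra.
Qed.

Lemma disk_in p z w lo rho0 : 0 < lo -> Sq p z = lo -> Sq z w <= (sqrt lo / 2)^2 ->
  9/4 * lo < rho0^2 -> 0 < Sq p w < rho0^2.
Proof.
intros Hlo Hz Hw Hr.
assert (Hs : 0 < sqrt lo) by (apply sqrt_lt_R0; auto).
assert (H1 : sqrt (Sq z w) <= sqrt lo / 2).
{ rewrite <- (sqrt_pow2 (sqrt lo / 2)) by lra. apply sqrt_le_1_alt; auto. }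
pose proof (Sq_tri p w z) as T1.
pose proof (Sq_tri p z w) as T2.
rewrite (Sq_sym w z) in T1. rewrite Hz in *.
assert (Hsw : 0 <= sqrt (Sq p w)) by apply sqrt_pos.
assert (HSS : Sq p w = sqrt (Sq p w) ^ 2) by (rewrite pow2_sqrt; auto using Sq_nonneg).
assert (Hlo2 : lo = sqrt lo ^ 2) by (rewrite pow2_sqrt; lra).
split.
- assert (0 < sqrt (Sq p w)) by lra. rewrite HSS. nra.
- assert (sqrt (Sq p w) <= 3/2 * sqrt lo) by lra.
  rewrite HSS. nra.
Qed.

Lemma E2 rho t : 0 < rho -> exp (2*(ln rho - t)) = rho^2 * exp (-(2*t)).
Proof.
intros H. replace (2*(ln rho - t)) with (ln rho + ln rho + -(2*t)) by ring.
rewrite !exp_plus, exp_ln by auto. ring.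
Qed.

Lemma Lf_E2 rho t : 0 < rho -> Lf rho (exp (2*(ln rho - t))) = t.
Proof. intros H. unfold Lf. rewrite ln_exp. field. Qed.


Lemma punct (D : pt -> Prop) (u : pt -> R) (p : pt) (rho0 rho eps : R) (x : pt) :
  Ck 2 D u -> (forall x, D x -> Lap u x = exp (2 * u x)) ->
  (forall z, 0 < Sq p z < rho0^2 -> D z) ->
  0 < rho -> 2 * rho <= rho0 -> rho < 1 -> 0 < eps ->
  0 < Sq p x < rho^2 ->
  u x <= Phe rho eps (Sq p x).
Proof.
intros Hreg Heq HD Hr Hr0 Hr1 He Hx.
set (s0 := Sq p x).
assert (HL0 : 0 < Lf rho s0) by (apply Lf_pos; unfold s0; auto).
set (L0 := Lf rho s0) in *.
set (F := u x - Phe rho eps s0).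
assert (Hrr : rho^2 < rho0^2) by nra.
assert (Hcu : forall z, s0 <= Sq p z -> Sq p z <= rho^2 -> epsdelta u z).
{ intros z H1 H2. apply cont_epsdelta. destruct Hreg as [Hc _]. apply Hc, HD. unfold s0 in *; lra. }
destruct (EVTM.evt u p s0 (rho^2) ltac:(unfold s0; lra) ltac:(unfold s0; lra) Hcu) as [zm [_ [_ Hm]]].
set (M := u zm).
set (eta := Rmin (L0/2) (exp (F - M) / 2)).
assert (Heta : 0 < eta) by (unfold eta; apply Rmin_pos; [lra|pose proof (exp_pos (F-M)); lra]).
assert (Heta1 : eta <= L0/2) by apply Rmin_l.
assert (Heta2 : ln eta < F - M).
{ assert (eta < exp (F - M)) by (pose proof (Rmin_r (L0/2) (exp (F-M) / 2)); pose proof (exp_pos (F-M)); unfold eta in *; lra).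
  rewrite <- (ln_exp (F - M)). apply ln_increasing; auto. }
set (hi := exp (2 * (ln rho - eta))).
assert (Hhi1 : hi < rho^2).
{ unfold hi. rewrite E2 by auto. assert (exp (-(2*eta)) < 1) by (rewrite <- exp_0; apply exp_increasing; lra). nra. }
assert (Hhi0 : s0 < hi).
{ unfold hi. rewrite <- (exp_ln s0) by (unfold s0; lra). apply exp_increasing.
  unfold L0, Lf in HL0, Heta1. lra. }
assert (Hhieta : Lf rho hi = eta) by (unfold hi; apply Lf_E2; auto).
set (q := 4 / eps + Rabs (ln 4 - F) + 1 + L0).
assert (Hq1 : 4 / eps > 0) by (apply Rdiv_lt_0_compat; lra).
assert (Hq : 1 <= q) by (unfold q; pose proof (Rabs_pos (ln 4 - F)); lra).
set (Lin := q^2).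
assert (HLin : L0 < Lin) by (unfold Lin, q in *; pose proof (Rabs_pos (ln 4 - F)); nra).
set (lo := exp (2 * (ln rho - Lin))).
assert (Hlo0 : 0 < lo) by apply exp_pos.
assert (Hlo1 : lo < s0).
{ unfold lo. rewrite <- (exp_ln s0) by (unfold s0; lra). apply exp_increasing.
  unfold L0, Lf in HLin. lra. }
assert (HloL : Lf rho lo = Lin) by (unfold lo; apply Lf_E2; auto).
apply (compare D u p (Phe rho eps) (Phe1 rho eps) (Phe2 rho eps) (lo/2) ((hi + rho^2)/2) lo hi x Hreg Heq).
- lra.
- lra.
- lra.
- unfold s0 in *; lra.
- intros z Hz. apply HD. lra.
- intros s Hs. apply punct_super; lra.
-
  intros z Hz. fold s0. fold F. rewrite Hz.
  assert (u z <= M) by (apply Hm; lra).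
  unfold Phe at 1. rewrite Hhieta.
  assert (ln hi < 0) by (rewrite <- ln_1; apply ln_increasing; nra).
  assert (0 <= eps * eta) by nra.
  lra.
-
  intros _ z Hz. fold s0. fold F. rewrite Hz.
  assert (Hs : 0 < sqrt lo) by (apply sqrt_lt_R0; auto).
  assert (HK := KO D u z (sqrt lo / 2) Hreg Heq ltac:(lra)).
  assert (Hub : u z <= ln 4 - ln lo / 2).
  { assert (E1 : ln (2 * (sqrt lo / 2)) - ln ((sqrt lo / 2)^2) = ln 4 - ln lo / 2).
    { replace (2 * (sqrt lo / 2)) with (sqrt lo) by field.
      replace ((sqrt lo / 2)^2) with (lo / 4) by (unfold Rdiv; rewrite Rpow_mult_distr, pow2_sqrt by lra; field).
      unfold Rdiv. rewrite ln_mult, ln_Rinv by lra.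
      assert (ln lo = 2 * ln (sqrt lo)).
      { rewrite <- (sqrt_sqrt lo) at 1 by lra. rewrite ln_mult by auto. ring. }
      lra. }
    rewrite <- E1. apply HK. intros w Hw. apply HD.
    apply (disk_in p z w lo rho0); auto.
    assert (lo < rho^2) by lra. nra. }
  unfold Phe at 1. rewrite HloL.
  assert (Hlq : ln Lin = 2 * ln q) by (unfold Lin; rewrite ln_pow by lra; simpl; ring).
  assert (ln q < q) by (apply ln_lt_self; lra).
  assert (Heq4 : eps * q >= 4).
  { unfold q. assert (eps * (4/eps) = 4) by (field; lra). pose proof (Rabs_pos (ln 4 - F)). nra. }
  assert (Hab : ln 4 - F <= Rabs (ln 4 - F)) by apply Rle_abs.
  assert (eps * Lin >= 4 * q) by (unfold Lin; nra).
  assert (q >= Rabs (ln 4 - F) + 1) by (unfold q; lra).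
  lra.
Qed.



Lemma ln_sq d : 0 < d -> ln (d^2) = 2 * ln d.
Proof. intros H. simpl. rewrite Rmult_1_r, ln_mult by auto. ring. Qed.

Lemma ln_le_mono a b : 0 < a -> a <= b -> ln a <= ln b.
Proof. intros H1 H2. destruct (Rle_lt_or_eq_dec _ _ H2) as [H|H]; [left; apply ln_increasing; auto|right; subst; auto]. Qed.

Lemma upper_arith rho d U : 0 < rho < 1 -> 0 < d < rho^2 ->
  U <= - (ln (d^2) / 2) - ln (ln rho - ln (d^2) / 2) ->
  U + ln (- d * ln d) <= ln 2.
Proof.
intros Hr Hd HU. rewrite ln_sq in HU by lra.
assert (Hlr : ln rho < 0) by (rewrite <- ln_1; apply ln_increasing; lra).
assert (Hld : ln d < 2 * ln rho).
{ rewrite <- ln_sq by lra. apply ln_increasing; lra. }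
replace (2 * ln d / 2) with (ln d) in HU by field.
replace (- d * ln d) with (d * (- ln d)) by ring.
rewrite ln_mult by lra.
assert (ln (- ln d) <= ln 2 + ln (ln rho - ln d)).
{ rewrite <- ln_mult by lra. apply ln_le_mono; lra. }
lra.
Qed.

Lemma lower_arith r d U : 0 < r -> 0 < d < 1 -> d < r -> d < / r ->
  - ln (- r * d * ln (d / r)) <= U -> - ln r - ln 2 <= U + ln (- d * ln d).
Proof.
intros Hr Hd Hdr Hdr' HU.
assert (Hld : ln d < 0) by (rewrite <- ln_1; apply ln_increasing; lra).
assert (Hlr : ln d < ln r) by (apply ln_increasing; lra).
assert (Hlr' : ln d < - ln r) by (rewrite <- ln_Rinv by lra; apply ln_increasing; lra).
unfold Rdiv in HU. rewrite (ln_mult d (/ r)) in HU by (try apply Rinv_0_lt_compat; lra).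
rewrite ln_Rinv in HU by lra.
replace (- r * d * (ln d + - ln r)) with (r * (d * (ln r - ln d))) in HU by ring.
assert (0 < ln r - ln d) by lra.
assert (0 < d * (ln r - ln d)) by (apply Rmult_lt_0_compat; lra).
rewrite !ln_mult in HU by lra.
replace (- d * ln d) with (d * (- ln d)) by ring.
rewrite ln_mult by lra.
assert (ln (ln r - ln d) <= ln 2 + ln (- ln d)).
{ rewrite <- ln_mult by lra. apply ln_le_mono; lra. }
lra.
Qed.


Lemma finite_min (n : nat) (P : nat -> Prop) (f : nat -> R) :
  (forall j, (j < n)%nat -> P j -> 0 < f j) ->
  exists d, 0 < d /\ forall j, (j < n)%nat -> P j -> d <= f j.
Proof.
induction n as [|n IH]; intros H.
- exists 1; split; [lra|]. intros j Hj; lia.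
- destruct IH as [d [Hd Hd']].
  { intros j Hj HP. apply H; auto; lia. }
  destruct (Classical_Prop.classic (P n)) as [Pn|Pn].
  + exists (Rmin d (f n)); split.
    * assert (0 < f n) by (apply H; [lia|exact Pn]). apply Rmin_pos; lra.
    * intros j Hj HP. destruct (Nat.eq_dec j n) as [->|Hne].
      -- apply Rmin_r.
      -- pose proof (Rmin_l d (f n)). pose proof (Hd' j ltac:(lia) HP). lra.
  + exists d; split; auto. intros j Hj HP. destruct (Nat.eq_dec j n) as [->|Hne]; [contradiction|].
    apply Hd'; auto; lia.
Qed.

Lemma finite_C (n : nat) (Q : nat -> R -> Prop) :
  (forall l C C', C <= C' -> Q l C -> Q l C') ->
  (forall l, (l < n)%nat -> exists C, Q l C) ->
  exists C, forall l, (l < n)%nat -> Q l C.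
Proof.
intros Hm. induction n as [|n IH]; intros H.
- exists 0. intros l Hl; lia.
- destruct IH as [C HC]. { intros l Hl. apply H; lia. }
  destruct (H n ltac:(lia)) as [Cn HCn].
  exists (Rmax C Cn). intros l Hl. destruct (Nat.eq_dec l n) as [->|Hne].
  + apply (Hm n Cn); auto. apply Rmax_r.
  + apply (Hm l C); [apply Rmax_l|]. apply HC; lia.
Qed.

Lemma Sq_pos_neq a b : b <> a -> 0 < Sq a b.
Proof.
intros H. destruct (Rle_or_lt (Sq a b) 0) as [H0|H0]; [exfalso|exact H0].
unfold Sq in H0. pose proof (pow2_ge_0 (fst b - fst a)). pose proof (pow2_ge_0 (snd b - snd a)).
assert (E1 : (fst b - fst a)^2 = 0) by lra. assert (E2 : (snd b - snd a)^2 = 0) by lra.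
simpl in E1, E2. rewrite Rmult_1_r in E1, E2.
apply Rsqr_0_uniq in E1. apply Rsqr_0_uniq in E2.
apply H. destruct a, b; simpl in *. f_equal; lra.
Qed.

Lemma local_bound
  (Omega : pt -> Prop) (n : nat) (p : nat -> pt) (u : pt -> R)
  (Hdom : plane_domain Omega)
  (Hp : forall l, (l < n)%nat -> Omega (p l))
  (D : pt -> Prop)
  (HD : forall x, D x <-> Omega x /\ forall l, (l < n)%nat -> x <> p l)
  (Hreg : Ck 2 D u)
  (Heq : forall x, D x -> Lap u x = exp (2 * u x))
  (Hlow : forall l, (l < n)%nat ->
     exists r, 0 < r /\ (forall x, Omega x -> dist2 x (p l) < r) /\
       exists d, 0 < d /\ forall x, D x -> dist2 x (p l) < d ->
         - ln (- r * dist2 x (p l) * ln (dist2 x (p l) / r)) <= u x)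
  (l : nat) (Hl : (l < n)%nat) :
  exists C, exists d, 0 < d /\ forall x, D x -> dist2 x (p l) < d ->
      Rabs (u x + ln (- dist2 x (p l) * ln (dist2 x (p l)))) < C.
Proof.
set (pl := p l).
destruct Hdom as [Hopen _].
destruct (Hopen pl (Hp l Hl)) as [e [He HeO]].
destruct (finite_min n (fun j => p j <> pl) (fun j => dist2 (p j) pl)) as [dl [Hdl Hdl']].
{ intros j Hj Hne. apply sqrt_lt_R0. apply (Sq_pos_neq pl (p j) Hne). }
set (rho0 := Rmin e dl).
assert (Hrho0 : 0 < rho0) by (apply Rmin_pos; auto).
assert (HDin : forall z, 0 < Sq pl z < rho0^2 -> D z).
{ intros z [Hz1 Hz2].
  assert (Hdz : dist2 z pl < rho0).
  { change (dist2 z pl) with (sqrt (Sq pl z)).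
    rewrite <- (sqrt_pow2 rho0) by lra. apply sqrt_lt_1_alt; lra. }
  apply HD. split.
  - apply HeO. pose proof (Rmin_l e dl). unfold rho0 in Hdz. lra.
  - intros j Hj Heqz. destruct (Classical_Prop.classic (p j = pl)) as [E|E].
    + rewrite Heqz, E in Hz1. unfold Sq in Hz1. rewrite !Rminus_eq_0 in Hz1. simpl in Hz1. lra.
    + pose proof (Hdl' j Hj E). rewrite <- Heqz in H. pose proof (Rmin_r e dl). unfold rho0 in Hdz. lra. }
set (rho := Rmin (rho0/2) (1/2)).
assert (Hrho : 0 < rho) by (apply Rmin_pos; lra).
assert (Hrho1 : rho <= 1/2) by apply Rmin_r.
assert (Hrho2 : 2 * rho <= rho0) by (pose proof (Rmin_l (rho0/2) (1/2)); unfold rho; lra).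
assert (Hup : forall x, 0 < Sq pl x < rho^2 -> u x <= Phe rho 0 (Sq pl x)).
{ intros x Hx.
  assert (HL : 0 < Lf rho (Sq pl x)) by (apply Lf_pos; auto).
  destruct (Rle_or_lt (u x) (Phe rho 0 (Sq pl x))) as [H|H]; [exact H|exfalso].
  set (eps := (u x - Phe rho 0 (Sq pl x)) / (2 * Lf rho (Sq pl x))).
  assert (Heps : 0 < eps) by (unfold eps; apply Rdiv_lt_0_compat; lra).
  pose proof (punct D u pl rho0 rho eps x Hreg Heq HDin Hrho Hrho2 ltac:(lra) Heps Hx) as Hp'.
  unfold Phe in H, Hp'.
  assert (eps * Lf rho (Sq pl x) = (u x - Phe rho 0 (Sq pl x)) / 2) by (unfold eps; field; lra).
  unfold Phe in H0. lra. }
destruct (Hlow l Hl) as [r [Hr [_ [d1 [Hd1 Hlow']]]]].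
exists (Rabs (ln r) + ln 2 + 1).
assert (Hrr : rho^2 < 1) by nra.
exists (Rmin (Rmin d1 (rho^2)) (Rmin r (/ r))).
split.
{ apply Rmin_pos; apply Rmin_pos; try lra; try nra. apply Rinv_0_lt_compat; lra. }
intros x HDx Hdx.
pose proof (Rmin_l (Rmin d1 (rho^2)) (Rmin r (/ r))) as M1.
pose proof (Rmin_r (Rmin d1 (rho^2)) (Rmin r (/ r))) as M2.
pose proof (Rmin_l d1 (rho^2)). pose proof (Rmin_r d1 (rho^2)).
pose proof (Rmin_l r (/ r)). pose proof (Rmin_r r (/ r)).
set (dd := dist2 x pl) in *.
assert (Hxne : x <> pl) by (apply HD in HDx; destruct HDx as [_ Hne]; apply Hne; auto).
assert (HS : Sq pl x = dd^2) by (unfold dd; change (dist2 x pl) with (sqrt (Sq pl x)); rewrite pow2_sqrt; auto using Sq_nonneg).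
assert (Hdd : 0 < dd) by (unfold dd; apply sqrt_lt_R0; apply Sq_pos_neq; auto).
assert (Hdd2 : dd < rho^2) by lra.
assert (HSx : 0 < Sq pl x < rho^2) by (rewrite HS; split; nra).
assert (U1 := Hup x HSx).
rewrite HS in U1. unfold Phe in U1. unfold Lf in U1.
rewrite Rmult_0_l, Rplus_0_r in U1.
assert (V1 := upper_arith rho dd (u x) ltac:(lra) ltac:(lra) U1).
assert (Hd1' : dist2 x (p l) < d1) by (change (dist2 x (p l)) with dd; lra).
assert (V2 := lower_arith r dd (u x) Hr ltac:(lra) ltac:(lra) ltac:(lra) (Hlow' x HDx Hd1')).
assert (0 < ln 2) by (rewrite <- ln_1; apply ln_increasing; lra).
pose proof (Rabs_pos (ln r)). pose proof (Rle_abs (- ln r)) as HH. rewrite Rabs_Ropp in HH. pose proof (Rle_abs (ln r)).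
apply Rabs_def1; lra.
Qed.

Theorem proposition5p2
  (Omega : pt -> Prop) (n : nat) (p : nat -> pt) (u : pt -> R)
  (Hdom : plane_domain Omega) (Hbdd : bounded_set Omega) (Hsm : smooth_boundary Omega)
  (Hp : forall l, (l < n)%nat -> Omega (p l))
  (D : pt -> Prop)
  (HD : forall x, D x <-> Omega x /\ forall l, (l < n)%nat -> x <> p l)
  (Hreg : Ck 2 D u)
  (Heq : forall x, D x -> Lap u x = exp (2 * u x))
  (Hbd : forall q, bdry Omega q -> tends_pinfty_at D u q)
  (Hpt : forall l, (l < n)%nat -> tends_pinfty_at D u (p l))
  (Hlow : forall l, (l < n)%nat ->
     exists r, 0 < r /\ (forall x, Omega x -> dist2 x (p l) < r) /\
       exists d, 0 < d /\ forall x, D x -> dist2 x (p l) < d ->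
         - ln (- r * dist2 x (p l) * ln (dist2 x (p l) / r)) <= u x) :
  exists C, forall l, (l < n)%nat ->
    exists d, 0 < d /\ forall x, D x -> dist2 x (p l) < d ->
      Rabs (u x + ln (- dist2 x (p l) * ln (dist2 x (p l)))) < C.
Proof.
apply (finite_C n (fun l C => exists d, 0 < d /\ forall x, D x -> dist2 x (p l) < d ->
      Rabs (u x + ln (- dist2 x (p l) * ln (dist2 x (p l)))) < C)).
- intros l C C' HC [d [Hd Hd']]. exists d; split; auto. intros x H1 H2. specialize (Hd' x H1 H2). lra.
- intros l Hl. apply (local_bound Omega n p u Hdom Hp D HD Hreg Heq Hlow l Hl).
Qed.
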